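(* Let $N\ge1$ be an integer, $d>0$, $T\ge (N+1)d$, and $0\le s_1\le\dots\le s_N$. Let $x^e$ be the optimal solution of the problem $(P^e)$: $$\min_{x\in\mathbb{R}^{N+1}}\ \sum_{i=1}^{N+1}x_i^2$$ subject to $\sum_{i=1}^k x_i\ge s_k+kd$ for $1\le k\le N$, and $\sum_{i=1}^{N+1}x_i=T+Nd$. Let $\bar x$ be the output of the Inter-Update Balancing Algorithm defined in the context. Then $x_i^e=\bar x_i$ for all $1\le i\le N$.
   Context: Inter-Update Balancing Algorithm. Set $s_0:=0$, $s_{N+1}:=T-d$, and $i_0:=0$. For $k=0,1,2,\dots$, while $i_k<N+1$, do the following. 1. Compute $M_k=\max_{i_k<j\le N+1}\frac{s_j-s_{i_k}}{j-i_k}$. 2. Let $i_{k+1}$ be the largest index $j\in\{i_k+1,\dots,N+1\}$ attaining this maximum. 3. Set $\bar x_i=M_k+d$ for all $i_k<i\le i_{k+1}$. The algorithm stops once $i_{k+1}=N+1$. Problem $(P^e)$ has a strictly convex objective, so its optimal solution is unique. *)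

(* Defs.v *)
From HB Require Import structures.
From mathcomp Require Import all_boot all_order all_algebra.
Set Implicit Arguments. Unset Strict Implicit. Unset Printing Implicit Defensive.
Import Order.TTheory GRing.Theory Num.Theory.
Local Open Scope ring_scope.

Section IUB.
Variables (R : realFieldType) (N : nat) (T d : R) (s : nat -> R).

Definition sext (j : nat) : R :=
  if j == 0%N then 0 else if j == N.+1 then T - d else s j.

Definition slope (i j : nat) : R := (sext j - sext i) / (j - i)%:R.

(* For i < N+1: the pair (M, i') where M = max_{i<j<=N+1} slope i j and
   i' is the LARGEST index j in (i, N+1] attaining this maximum
   (ties are resolved in favour of later indices by the >= test). *)
Definition best_step (i : nat) : R * nat :=
  foldl (fun acc j => if acc.1 <= slope i j then (slope i j, j) else acc)
        (slope i i.+1, i.+1) (iota i.+2 (N - i)).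

Fixpoint iub_run (fuel i : nat) : nat -> R :=
  match fuel with
  | 0%N => fun _ => 0
  | fuel'.+1 =>
      if (i < N.+1)%N then
        let: (M, i') := best_step i in
        let rest := iub_run fuel' i' in
        fun m => if (i < m <= i')%N then M + d else rest m
      else fun _ => 0
  end.

(* Output xbar of the Inter-Update Balancing Algorithm (indices 1..N+1);
   N+1 iterations suffice since the breakpoint strictly increases. *)
Definition iub_xbar : nat -> R := iub_run N.+1 0.

Definition Pe_feasible (x : nat -> R) : Prop :=
  (forall k, (1 <= k <= N)%N -> s k + k%:R * d <= \sum_(1 <= i < k.+1) x i) /\
  \sum_(1 <= i < N.+2) x i = T + N%:R * d.

Definition Pe_obj (x : nat -> R) : R := \sum_(1 <= i < N.+2) x i ^+ 2.

Definition Pe_optimal (x : nat -> R) : Prop :=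
  Pe_feasible x /\ forall y, Pe_feasible y -> Pe_obj x <= Pe_obj y.

End IUB.

(* Main.v *)
Require Import Defs.
From mathcomp Require Import all_boot all_order all_algebra.
From mathcomp Require Import ring lra zify.
Set Implicit Arguments. Unset Strict Implicit. Unset Printing Implicit Defensive.
Import Order.TTheory GRing.Theory Num.Theory.
Local Open Scope ring_scope.

Section Proof.
Variables (R : realFieldType) (N : nat) (T d : R) (s : nat -> R).

Local Notation sl := (slope N T d s).
Local Notation se := (sext N T d s).
Definition bb (k : nat) : R := se k + k%:R * d.

Lemma le_eqR (a b : R) : a = b -> a <= b. Proof. by move->. Qed.

Lemma subn_pos (i k : nat) : (i < k)%N -> (0 : R) < (k - i)%:R.
Proof. by move=> h; rewrite ltr0n subn_gt0. Qed.

Lemma slope_eq i k : (i < k)%N -> se k = se i + sl i k * (k%:R - i%:R).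
Proof.
move=> h; rewrite -natrB ?(ltnW h) // /slope divfK; first ring.
by rewrite gt_eqF // subn_pos.
Qed.

Lemma slope_le i k M : (i < k)%N ->
  (sl i k <= M) = (se k - se i <= M * (k%:R - i%:R)).
Proof. by move=> h; rewrite /slope ler_pdivrMr ?subn_pos // natrB // ltnW. Qed.

Lemma slope_trans i i' j M : (i < i')%N -> (i' < j)%N -> M = sl i i' ->
  sl i j <= M -> sl i' j <= M.
Proof.
move=> h1 h2 hM; rewrite !slope_le //; last by apply: ltn_trans h2.
have := slope_eq h1; rewrite -hM => ->.
have : (i%:R : R) <= i'%:R by rewrite ler_nat ltnW.
have : (i'%:R : R) <= j%:R by rewrite ler_nat ltnW.
move=> _ _ h; lra.
Qed.

Lemma fold_inv i n : forall m (acc : R * nat), (i < acc.2 <= N.+1)%N -> acc.1 = sl i acc.2 ->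
  (forall j, (i < j < m)%N -> sl i j <= acc.1) -> (i < m)%N -> (m + n <= N.+2)%N ->
  let r := foldl (fun acc j => if acc.1 <= sl i j then (sl i j, j) else acc) acc (iota m n) in
  [/\ (i < r.2 <= N.+1)%N, r.1 = sl i r.2 & forall j, (i < j < m + n)%N -> sl i j <= r.1].
Proof.
elim: n => [|n IH] m acc h1 h2 h3 h4 h5 /=.
  by rewrite addn0.
rewrite addnS -addSn; case: ifP => hle; apply: IH => //=; try lia.
- move=> j hj; have [->|hne] := eqVneq j m; first exact: lexx.
  apply: le_trans hle; apply: h3; lia.
- move=> j hj; have [->|hne] := eqVneq j m.
    by move/negbT: hle; rewrite -ltNge => /ltW.
  apply: h3; lia.
Qed.

Lemma best_stepP i : (i <= N)%N ->
  let: (M, i') := best_step N T d s i in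
  [/\ (i < i' <= N.+1)%N, M = sl i i' & forall j, (i < j <= N.+1)%N -> sl i j <= M].
Proof.
move=> hi; rewrite /best_step.
have := @fold_inv i (N - i) i.+2 (sl i i.+1, i.+1).
case: foldl => M i' H; have [] := H => //=; try lia.
  move=> j hj; have -> : j = i.+1 by lia. exact: lexx.
move=> h1 h2 h3; split => // j hj; apply: h3; lia.
Qed.

Lemma seg_sum (F : nat -> R) v i k : (forall l, (i < l <= k)%N -> F l = v) ->
  \sum_(i.+1 <= l < k.+1) F l = (k - i)%:R * v.
Proof.
move=> h; rewrite (eq_big_nat _ _ (F2 := fun _ => v)); last by move=> l hl; apply: h; lia.
by rewrite sumr_const_nat subSS mulr_natl.
Qed.

Lemma tail fuel : forall i, (i <= N)%N -> (N.+1 <= fuel + i)%N ->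
  let f := iub_run N T d s fuel i in
  [/\ f i.+1 = (best_step N T d s i).1 + d,
      forall k, (i < k <= N.+1)%N -> bb k - bb i <= \sum_(i.+1 <= l < k.+1) f l,
      \sum_(i.+1 <= l < N.+2) f l = bb N.+1 - bb i &
      forall (y : nat -> R) c, 0 <= c ->
        (forall k, (i < k <= N)%N -> bb k - bb i <= c + \sum_(i.+1 <= l < k.+1) y l) ->
        c + \sum_(i.+1 <= l < N.+2) y l = bb N.+1 - bb i ->
        - f i.+1 * c <= \sum_(i.+1 <= l < N.+2) f l * (y l - f l)].
Proof.
elim: fuel => [|fuel IH] i hiN hf; first by lia.
have hlt : (i < N.+1)%N by lia.
have := best_stepP hiN; case E: (best_step N T d s i) => [M i'] [hi' hM hmax].
move=> F; set rest := iub_run N T d s fuel i'.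
have eF : F = fun m => if (i < m <= i')%N then M + d else rest m.
  by rewrite /F /= hlt E.
clearbody F.
have hF1 : forall m, (i < m <= i')%N -> F m = M + d by move=> m hm; rewrite eF hm.
have hF2 : forall m, (i' < m)%N -> F m = rest m.
  by move=> m hm; rewrite eF ifF //; apply/negbTE; lia.
rewrite /=.
have hseg : forall k, (i <= k <= i')%N -> \sum_(i.+1 <= l < k.+1) F l = (k - i)%:R * (M + d).
  move=> k hk; apply: seg_sum => l hl; apply: hF1; lia.
have hii' : (i < i')%N by lia.
have hsegb : (i' - i)%:R * (M + d) = bb i' - bb i.
  rewrite /bb (slope_eq hii') -hM natrB; [ring | exact: ltnW].
have hsplit : forall (G : nat -> R) k, (i' <= k)%N ->
   \sum_(i.+1 <= l < k.+1) G l = \sum_(i.+1 <= l < i'.+1) G l + \sum_(i'.+1 <= l < k.+1) G l.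
  by move=> G k hk; rewrite (big_cat_nat _ (n := i'.+1)) //; lia.
have hrestS : forall k, \sum_(i'.+1 <= l < k) F l = \sum_(i'.+1 <= l < k) rest l.
  by move=> k; apply: eq_big_nat => l hl; apply: hF2; lia.
have hrestP : forall (y : nat -> R) k, \sum_(i'.+1 <= l < k) F l * (y l - F l)
     = \sum_(i'.+1 <= l < k) rest l * (y l - rest l).
  by move=> y k; apply: eq_big_nat => l hl; rewrite hF2 //; lia.
have hsegP : forall (y : nat -> R), \sum_(i.+1 <= l < i'.+1) F l * (y l - F l)
     = (M + d) * (\sum_(i.+1 <= l < i'.+1) y l - (bb i' - bb i)).
  move=> y; rewrite (eq_big_nat _ _ (F2 := fun l => (M + d) * (y l - F l))); last first.
    by move=> l hl; rewrite hF1 //; lia.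
  by rewrite -mulr_sumr sumrB hseg ?hsegb //; lia.
split.
- apply: hF1; lia.
- move=> k hk; have [hki'|hki'] := leqP k i'.
  + rewrite hseg; last lia.
    have hsk := hmax k hk; rewrite slope_le in hsk; last lia.
    rewrite /bb natrB; last lia.
    rewrite /bb in hsk. lra.
  + have [hr1 hr2 hr3 hr4] := IH i' (ltac:(lia)) (ltac:(lia)).
    rewrite hsplit; last lia.
    rewrite hseg ?hsegb; last lia.
    rewrite hrestS; have := hr2 k (ltac:(lia)); lra.
- have [hi'N|hi'eq] : (i' <= N)%N \/ i' = N.+1 by lia.
  + have [hr1 hr2 hr3 hr4] := IH i' (ltac:(lia)) (ltac:(lia)).
    rewrite hsplit; last lia.
    rewrite hseg ?hsegb; last lia.
    rewrite hrestS hr3; ring.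
  + subst i'; rewrite hseg ?hsegb //; lia.
- move=> y c hc hy htot; rewrite hF1; last lia.
  have [hi'N|hi'eq] : (i' <= N)%N \/ i' = N.+1 by lia.
  + have [hr1 hr2 hr3 hr4] := IH i' (ltac:(lia)) (ltac:(lia)).
    rewrite hsplit; last lia.
    rewrite hsegP hrestP.
    set Sy := \sum_(i.+1 <= l < i'.+1) y l.
    have hc' : 0 <= c + Sy - (bb i' - bb i) by have := hy i' (ltac:(lia)); rewrite -/Sy; lra.
    have := hr4 y (c + Sy - (bb i' - bb i)) hc'.
    have hy' : forall k, (i' < k <= N)%N ->
        bb k - bb i' <= c + Sy - (bb i' - bb i) + \sum_(i'.+1 <= l < k.+1) y l.
      move=> k hk; have := hy k (ltac:(lia)); rewrite (hsplit y k); last lia.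
      rewrite -/Sy; lra.
    have htot' : c + Sy - (bb i' - bb i) + \sum_(i'.+1 <= l < N.+2) y l = bb N.+1 - bb i'.
      move: htot; rewrite (hsplit y N.+1); last lia.
      rewrite -/Sy; lra.
    move=> /(_ hy' htot').
    rewrite /rest hr1.
    have hv : (best_step N T d s i').1 <= M.
      have := best_stepP hi'N; case: (best_step N T d s i') => [M' i''] [h1 h2 h3] /=.
      rewrite h2; apply: (slope_trans hii' _ hM); [lia | apply: hmax; lia].
    have hv' : 0 <= M + d - ((best_step N T d s i').1 + d) by lra.
    have := mulr_ge0 hv' hc'.
    move=> hp ht; nra.
  + subst i'; rewrite hsegP.
    have -> : \sum_(i.+1 <= l < N.+2) y l = bb N.+1 - bb i - c by rewrite -htot; ring.
    apply: le_eqR; ring.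
Qed.
End Proof.

Theorem lemma5 (R : realFieldType) (N : nat) (d T : R) (s : nat -> R)
  (xe : nat -> R) :
  (1 <= N)%N -> 0 < d -> N.+1%:R * d <= T ->
  0 <= s 1%N -> (forall k, (1 <= k < N)%N -> s k <= s k.+1) ->
  Pe_optimal N T d s xe ->
  forall i, (1 <= i <= N)%N -> xe i = iub_xbar N T d s i.
Proof.
move=> hN hd hT hs0 hmono [[hfe htot] hopt] i hi.
have [t1 t2 t3 t4] := @tail R N T d s N.+1 0 (leq0n N) (ltac:(lia)).
rewrite /iub_xbar.
set f := iub_run N T d s N.+1 0 in t1 t2 t3 t4 *.
have hb0 : bb N T d s 0 = 0 by rewrite /bb /sext eqxx; ring.
have hbk : forall k, (1 <= k <= N)%N -> bb N T d s k = s k + k%:R * d.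
  move=> k hk; rewrite /bb /sext ifF; last by apply/negbTE; lia.
  rewrite ifF //; apply/negbTE; lia.
have hbN : bb N T d s N.+1 = T + N%:R * d.
  rewrite /bb /sext /= eqxx -[N.+1]addn1 natrD; ring.
have feas : Pe_feasible N T d s f.
  split.
  - move=> k hk; rewrite -hbk //; have := t2 k (ltac:(lia)); by rewrite hb0 subr0.
  - by rewrite t3 hb0 subr0.
have hle := hopt f feas.
have hpos : 0 <= \sum_(1 <= l < N.+2) f l * (xe l - f l).
  have h1 : forall k, (0 < k <= N)%N ->
      bb N T d s k - bb N T d s 0 <= 0 + \sum_(1 <= l < k.+1) xe l.
    move=> k hk; rewrite hb0 subr0 add0r hbk; [apply: hfe; lia | lia].
  have h2 : 0 + \sum_(1 <= l < N.+2) xe l = bb N T d s N.+1 - bb N T d s 0.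
    by rewrite add0r htot hbN hb0 subr0.
  by have := t4 xe 0 (lexx 0) h1 h2; rewrite mulr0.
have hid : Pe_obj N xe = \sum_(1 <= l < N.+2) (xe l - f l) ^+ 2 + Pe_obj N f
    + 2 * \sum_(1 <= l < N.+2) f l * (xe l - f l).
  rewrite /Pe_obj mulr_sumr -!big_split /=; apply: eq_bigr => l _; ring.
have hsq : \sum_(1 <= l < N.+2) (xe l - f l) ^+ 2 <= 0 by lra.
have e : \sum_(1 <= l < N.+2) (xe l - f l) ^+ 2 = \sum_(1 <= l < i) (xe l - f l) ^+ 2
   + (xe i - f i) ^+ 2 + \sum_(i.+1 <= l < N.+2) (xe l - f l) ^+ 2.
  rewrite (big_cat_nat _ (n := i)); [|lia|lia].
  rewrite [X in _ + X = _](big_cat_nat _ (n := i.+1)); [|lia|lia].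
  by rewrite big_nat1 addrA.
have g1 : 0 <= \sum_(1 <= l < i) (xe l - f l) ^+ 2.
  by apply: sumr_ge0 => l _; exact: sqr_ge0.
have g2 : 0 <= \sum_(i.+1 <= l < N.+2) (xe l - f l) ^+ 2.
  by apply: sumr_ge0 => l _; exact: sqr_ge0.
have h0 : (xe i - f i) ^+ 2 = 0.
  by apply/eqP; rewrite eq_le sqr_ge0 andbT; lra.
by move/eqP: h0; rewrite sqrf_eq0 subr_eq0 => /eqP.
Qed.
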